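(* Let $\Gamma_1,\Gamma_2$ be finite pseudoreflection groups acting on $\mathbb C^n$ with $\Gamma_2=P\Gamma_1P^{-1}$ for some invertible linear map $P$ of $\mathbb C^n$. Suppose that a domain $D\subset\mathbb C^n$ is invariant under $\Gamma_1$ and that $P$ restricts to an automorphism of $D$. Let $\theta_j$ be a basic polynomial map associated to $\Gamma_j$, $j=1,2$. Then the proper holomorphic maps $\theta_1:D\to\theta_1(D)$ and $\theta_2:D\to\theta_2(D)$ are isomorphic.
   Context: A pseudoreflection on $\mathbb C^n$ is a linear map $\rho$ of finite order with ${\rm rank}({\sf id}_n-\rho)=1$; a pseudoreflection group is a finite group generated by pseudoreflections. By the Chevalley–Shephard–Todd theorem, the ring of $\Gamma$-invariant polynomials equals $\mathbb C[\theta_1,\dots,\theta_n]$ for algebraically independent homogeneous polynomials $\theta_i$; the map $\theta=(\theta_1,\dots,\theta_n)$ is called a basic polynomial map associated to $\Gamma$. Two proper holomorphic maps $\pi_j:D_j\to G_j$ ($j=1,2$) are isomorphic if there are biholomorphisms $a:D_1\to D_2$ and $b:G_1\to G_2$ with $b\circ\pi_1=\pi_2\circ a$. *)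

(* Defs.v *)
From HB Require Import structures.
From mathcomp Require Import all_boot all_order all_algebra.
From mathcomp Require Import complex.
From mathcomp Require Import mpoly.
From mathcomp Require Import all_classical all_reals all_analysis.
Set Implicit Arguments. Unset Strict Implicit. Unset Printing Implicit Defensive.
Import Order.TTheory GRing.Theory Num.Theory.
Import numFieldTopology.Exports numFieldNormedType.Exports.
Local Open Scope classical_set_scope.
Local Open Scope ring_scope.

(* Points of C^n are column vectors 'cV[C]_n; a linear map of C^n is a square
   matrix A acting by x |-> A *m x.  Here C := R[i] for a realType R. *)

Section Defs.
Variable R : realType.
Local Notation C := (R[i]).
Variable n : nat.

Definition Cn : normedModType C := 'cV[C]_n.

Definition pseudoreflection (A : 'M[C]_n) : Prop :=
  (exists k : nat, (0 < k)%N /\ A ^+ k = 1%:M) /\ \rank (1%:M - A) = 1%N.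

Definition finite_linear_group (G : seq 'M[C]_n) : Prop :=
  [/\ 1%:M \in G,
      (forall g h, g \in G -> h \in G -> g *m h \in G),
      (forall g, g \in G -> g \in unitmx) &
      (forall g, g \in G -> invmx g \in G)].

Definition pseudoreflection_group (G : seq 'M[C]_n) : Prop :=
  finite_linear_group G /\
  forall g, g \in G ->
    exists s : seq 'M[C]_n,
      (forall r, r \in s -> r \in G /\ pseudoreflection r) /\
      g = foldr mulmx 1%:M s.

(* the linear substitution x |-> g x on polynomials: X_i |-> sum_j g_ij X_j *)
Definition lin_subst (g : 'M[C]_n) : n.-tuple (mpoly.mpoly n C) :=
  [tuple \sum_(j < n) g i j *: mpoly.mpolyX C (mpoly.mnm1 j) | i < n].

Definition invariant_poly (G : seq 'M[C]_n) (p : mpoly.mpoly n C) : Prop :=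
  forall g, g \in G -> mpoly.comp_mpoly (lin_subst g) p = p.

Definition basic_polynomial_map (G : seq 'M[C]_n)
    (theta : n.-tuple (mpoly.mpoly n C)) : Prop :=
  [/\ (forall i, tnth theta i \is mpoly.ishomog mpoly.mdeg),
      (forall q : mpoly.mpoly n C, mpoly.comp_mpoly theta q = 0 -> q = 0) &
      (forall p, invariant_poly G p <->
                 exists q : mpoly.mpoly n C, p = mpoly.comp_mpoly theta q)].

Definition poly_map (theta : n.-tuple (mpoly.mpoly n C)) (x : Cn)
  : Cn :=
  \col_(i < n) mpoly.meval (fun j => x j ord0) (tnth theta i).

(* holomorphic on U: complex (Frechet) differentiable at every point of U *)
Definition holomorphic_on (U : set Cn) (f : Cn -> Cn) : Prop :=
  forall x, U x -> differentiable f x.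

Definition biholomorphism (U V : set Cn) (f : Cn -> Cn) : Prop :=
  [/\ holomorphic_on U f, (forall x, U x -> V (f x)) &
      exists g : Cn -> Cn,
        [/\ holomorphic_on V g, (forall y, V y -> U (g y)),
            (forall x, U x -> g (f x) = x) & (forall y, V y -> f (g y) = y)]].

Definition isomorphic_maps (D1 G1 : set Cn) (pi1 : Cn -> Cn)
    (D2 G2 : set Cn) (pi2 : Cn -> Cn) : Prop :=
  exists a b : Cn -> Cn,
    [/\ biholomorphism D1 D2 a, biholomorphism G1 G2 b &
        forall x, D1 x -> b (pi1 x) = pi2 (a x)].

Definition domain (D : set Cn) : Prop :=
  [/\ D !=set0, open D & connected D].

End Defs.

(* Main.v *)
Require Import Defs.
From HB Require Import structures.
From mathcomp Require Import all_boot all_order all_algebra.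
From mathcomp Require Import complex.
From mathcomp Require Import mpoly.
From mathcomp Require Import all_classical all_reals all_analysis.
Import Order.TTheory GRing.Theory Num.Theory.
Import numFieldTopology.Exports numFieldNormedType.Exports.
Local Open Scope classical_set_scope.
Local Open Scope ring_scope.

Set Implicit Arguments. Unset Strict Implicit. Unset Printing Implicit Defensive.

Section Aux.
Variable R : realType.
Local Notation C := (R[i]).
Variable n : nat.

Lemma comp_lin (A B : 'M[C]_n) (t : mpoly.mpoly n C) :
  comp_mpoly (lin_subst A) (comp_mpoly (lin_subst B) t) =
  comp_mpoly (lin_subst (B *m A)) t.
Proof.
rewrite [comp_mpoly (lin_subst B) t]comp_mpolyEX [RHS]comp_mpolyEX raddf_sum /=.
apply: eq_bigr => m _; rewrite linearZ /= !comp_mpolyX rmorph_prod /=.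
congr (_ *: _); apply: eq_bigr => i _; rewrite rmorphXn /=; congr (_ ^+ _).
rewrite !tnth_mktuple raddf_sum /=.
under eq_bigr do rewrite linearZ /= comp_mpolyXU -tnth_nth tnth_mktuple scaler_sumr.
rewrite exchange_big /=; apply: eq_bigr => k _; rewrite mxE scaler_suml.
by apply: eq_bigr => j _; rewrite scalerA.
Qed.

Lemma inv_transfer (G H : seq 'M[C]_n) (M : 'M[C]_n) (t : mpoly.mpoly n C) :
  (forall h, h \in H -> exists2 g, g \in G & M *m h = g *m M) ->
  invariant_poly G t -> invariant_poly H (comp_mpoly (lin_subst M) t).
Proof.
move=> HG It h hH; have [g gG E] := HG h hH.
by rewrite comp_lin E -comp_lin It.
Qed.

Definition ev (x : Cn R n) : 'I_n -> C := fun j => x j ord0.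

Lemma meval_lin (M : 'M[C]_n) t (x : Cn R n) :
  meval (ev x) (comp_mpoly (lin_subst M) t) = meval (ev (M *m x)) t.
Proof.
rewrite comp_mpoly_meval; apply: meval_eq => j.
rewrite tnth_mktuple raddf_sum /= /ev mxE; apply: eq_bigr => k _.
by rewrite mevalZ mevalXU.
Qed.

Lemma meval_comp (theta : n.-tuple (mpoly.mpoly n C)) q (x : Cn R n) :
  meval (ev x) (comp_mpoly theta q) = meval (ev (poly_map theta x)) q.
Proof.
rewrite comp_mpoly_meval; apply: meval_eq => j.
by rewrite /ev /poly_map mxE.
Qed.


Lemma dsum (W : normedModType C) (I : Type) (s : seq I) (F : I -> Cn R n -> W) x :
  (forall i, differentiable (F i) x) ->
  differentiable (fun y => \sum_(i <- s) F i y) x.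
Proof.
move=> H; elim: s => [|a s IH].
  have -> : (fun y => \sum_(i <- [::]) F i y) = cst 0.
    by apply/funext => y; rewrite big_nil.
  exact: differentiable_cst.
have -> : (fun y => \sum_(i <- a :: s) F i y) =
   (F a) + (fun y => \sum_(i <- s) F i y).
  by apply/funext => y; rewrite big_cons.
exact: differentiableD.
Qed.

Lemma dprod (I : Type) (s : seq I) (F : I -> Cn R n -> C^o) x :
  (forall i, differentiable (F i) x) ->
  differentiable (fun y => \prod_(i <- s) F i y) x.
Proof.
move=> H; elim: s => [|a s IH].
  have -> : (fun y => \prod_(i <- [::]) F i y) = cst 1.
    by apply/funext => y; rewrite big_nil.
  exact: differentiable_cst.
have -> : (fun y => \prod_(i <- a :: s) F i y) =
   (F a) * (fun y => \prod_(i <- s) F i y).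
  by apply/funext => y; rewrite big_cons.
exact: differentiableM.
Qed.

Lemma dcoord j x : differentiable (fun y : Cn R n => (y j ord0 : C^o)) x.
Proof. exact: differentiable_coord. Qed.

Lemma dmeval p x : differentiable (fun y : Cn R n => (meval (ev y) p : C^o)) x.
Proof.
have -> : (fun y : Cn R n => (meval (ev y) p : C^o)) =
  (fun y => \sum_(m <- msupp p) (cst p@_m * 
      (fun y => \prod_(i < n) (fun y => \prod_(k < m i) y i ord0) y)) y).
  apply/funext => y; rewrite mevalE; apply: eq_bigr => m _ /=.
  congr (_ * _); apply: eq_bigr => i _.
  by rewrite prodr_const card_ord.
apply: dsum => m; apply: differentiableM; first exact: differentiable_cst.
by apply: dprod => i; apply: dprod => k; apply: dcoord.
Qed.

Lemma dcol (f : Cn R n -> Cn R n) x :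
  (forall i, differentiable (fun y => (f y i ord0 : C^o)) x) -> differentiable f x.
Proof.
move=> H.
have -> : f = fun y => \sum_(i < n) \sum_(j < 1) f y i j *: (delta_mx i j : Cn R n).
  by apply/funext => y; rewrite -matrix_sum_delta.
apply: dsum => i; apply: dsum => j; rewrite ord1.
exact: differentiableZl.
Qed.

Lemma dpoly_map (theta : n.-tuple (mpoly.mpoly n C)) x : differentiable (poly_map theta) x.
Proof.
apply: dcol => i.
have -> : (fun y => (poly_map theta y i ord0 : C^o)) = (fun y => (meval (ev y) (tnth theta i) : C^o)).
  by apply/funext => y; rewrite mxE.
exact: dmeval.
Qed.

Lemma dlin (M : 'M[C]_n) x : differentiable (fun y : Cn R n => (M *m y : Cn R n)) x.
Proof.
apply: dcol => i.
have -> : (fun y : Cn R n => ((M *m y) i ord0 : C^o)) =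
   (fun y => \sum_(j < n) (cst (M i j) * (fun y : Cn R n => (y j ord0 : C^o))) y).
  by apply/funext => y; rewrite mxE.
apply: dsum => j; apply: differentiableM; first exact: differentiable_cst.
exact: dcoord.
Qed.

End Aux.

Lemma poly_map_ev (R : realType) n (theta : n.-tuple (mpoly.mpoly n R[i])) (x : Cn R n) i j :
  poly_map theta x i j = meval (ev x) (tnth theta i).
Proof. by rewrite mxE. Qed.

Theorem proposition2p11 (R : realType) (n : nat)
    (G1 G2 : seq 'M[R[i]]_n) (P : 'M[R[i]]_n) (D : set (Cn R n))
    (theta1 theta2 : n.-tuple (mpoly.mpoly n R[i])) :
  pseudoreflection_group G1 ->
  pseudoreflection_group G2 ->
  P \in unitmx ->
  G2 =i [seq P *m g *m invmx P | g <- G1] ->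
  domain D ->
  (forall g x, g \in G1 -> D x -> D (g *m x)) ->
  (fun x => P *m x) @` D = D ->
  basic_polynomial_map G1 theta1 ->
  basic_polynomial_map G2 theta2 ->
  isomorphic_maps D (poly_map theta1 @` D) (poly_map theta1)
                  D (poly_map theta2 @` D) (poly_map theta2).
Proof.
move=> _ _ Pu HG2 _ _ PD [_ _ I1] [_ _ I2].
have invth (G : seq 'M[R[i]]_n) (th : n.-tuple (mpoly.mpoly n R[i])) :
    (forall p, invariant_poly G p <->
        exists q : mpoly.mpoly n R[i], p = comp_mpoly th q) ->
    forall k, invariant_poly G (tnth th k).
  move=> I k; apply/I; exists 'X_k.
  by rewrite comp_mpolyXU -tnth_nth.
have hq : forall k, exists q, comp_mpoly (lin_subst P) (tnth theta2 k) =
                              comp_mpoly theta1 q.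
  move=> k; apply/I1; apply: (inv_transfer (G := G2)); last exact: invth.
  move=> h hG1; exists (P *m h *m invmx P); first by rewrite HG2; apply/mapP; exists h.
  by rewrite mulmxKV.
have hr : forall k, exists r, comp_mpoly (lin_subst (invmx P)) (tnth theta1 k) =
                              comp_mpoly theta2 r.
  move=> k; apply/I2; apply: (inv_transfer (G := G1)); last exact: invth.
  move=> h; rewrite HG2 => /mapP [g gG1 ->]; exists g => //.
  by rewrite !mulmxA mulVmx // mul1mx.
have [qf Hq] := choice hq; have [rf Hr] := choice hr.
pose qt := [tuple qf k | k < n]; pose rt := [tuple rf k | k < n].
have bq x : poly_map qt (poly_map theta1 x) = poly_map theta2 (P *m x).
  apply/matrixP => k j; rewrite !poly_map_ev tnth_mktuple -meval_comp -Hq.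
  by rewrite meval_lin.
have br y : poly_map rt (poly_map theta2 y) = poly_map theta1 (invmx P *m y).
  apply/matrixP => k j; rewrite !poly_map_ev tnth_mktuple -meval_comp -Hr.
  by rewrite meval_lin.
have DP y : D y -> D (invmx P *m y).
  by rewrite -{1}PD => -[x Dx <-]; rewrite mulKmx.
have PDx x : D x -> D (P *m x) by move=> Dx; rewrite -PD; exists x.
exists (fun x => P *m x), (poly_map qt); split.
- split; first by move=> x _; apply: dlin.
    exact: PDx.
  exists (fun y => invmx P *m y); split.
  + by move=> x _; apply: dlin.
  + exact: DP.
  + by move=> x _; rewrite mulKmx.
  + by move=> x _; rewrite mulKVmx.
- split; first by move=> x _; apply: dpoly_map.
    by move=> _ [x Dx <-]; rewrite bq; exists (P *m x) => //; apply: PDx.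
  exists (poly_map rt); split.
  + by move=> x _; apply: dpoly_map.
  + by move=> _ [y Dy <-]; rewrite br; exists (invmx P *m y) => //; apply: DP.
  + by move=> _ [x Dx <-]; rewrite bq br mulKmx.
  + by move=> _ [y Dy <-]; rewrite br bq mulKVmx.
- by move=> x _; rewrite bq.
Qed.
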